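(* Let ${\bf S}$ be any logic over $For$ (a consequence relation $\vdash_{\bf S}$) lying between ${\bf Km}$ and ${\bf T45m}$, i.e. $\Gamma\vdash_{\bf Km}\alpha$ implies $\Gamma\vdash_{\bf S}\alpha$, and $\Gamma\vdash_{\bf S}\alpha$ implies $\Gamma\vdash_{\bf T45m}\alpha$, for all $\Gamma\cup\{\alpha\}\subseteq For$. Then ${\bf S}$ is a conservative extension of classical propositional logic ${\bf PC}$: for every formula $\alpha$ built from propositional variables using only $\neg$ and $\to$, $\vdash_{\bf S}\alpha$ iff $\alpha$ is a classical tautology.
   Context: Formulas are built from a denumerable set of propositional variables by the unary connectives $\neg$, $\Box$ and the binary connective $\to$; $For$ is the set of all formulas. Abbreviations: $\Diamond\alpha:=\neg\Box\neg\alpha$, $\alpha\vee\beta:=\neg\alpha\to\beta$, $\alpha\wedge\beta:=\neg(\alpha\to\neg\beta)$. All Hilbert calculi below have as axioms all instances (over $For$) of the axiom schemas of a standard Hilbert calculus for classical propositional logic in the signature $\{\neg,\to\}$, plus the listed modal schemas, with modus ponens as the only rule; $\Gamma\vdash_{\bf L}\alpha$ means there is a derivation of $\alpha$ from $\Gamma$ in ${\bf L}$. ${\bf Km}$: (K') $\Diamond\alpha\to(\Box(\alpha\to\beta)\to(\Box\alpha\to\Box\beta))$; (K1') $\Diamond\neg\beta\to(\Box(\alpha\to\beta)\to(\Diamond\alpha\to\Diamond\beta))$; (K2') $\Diamond\alpha\to(\Diamond(\alpha\to\beta)\to(\Box\alpha\to\Diamond\beta))$; (M3') $(\Diamond\alpha\vee\Diamond\neg\alpha)\to(\Diamond\beta\to\Diamond(\alpha\to\beta))$;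 (M4') $\Diamond\neg\beta\to(\Diamond\neg\alpha\to\Diamond(\alpha\to\beta))$; (I1) $(\Box\alpha\wedge\Box\neg\alpha)\to(\Box(\alpha\to\beta)\wedge\Box\neg(\alpha\to\beta))$; (I2) $(\Box\beta\wedge\Box\neg\beta)\to(\Box(\alpha\to\beta)\wedge\Box\neg(\alpha\to\beta))$; (M1) $\neg\Diamond\alpha\to\Box(\alpha\to\beta)$; (M2) $\Box\beta\to\Box(\alpha\to\beta)$; (DN1) $\Box\alpha\to\Box\neg\neg\alpha$; (DN2) $\Box\neg\neg\alpha\to\Box\alpha$. ${\bf T45m}$: (K) $\Box(\alpha\to\beta)\to(\Box\alpha\to\Box\beta)$; (K1) $\Box(\alpha\to\beta)\to(\Diamond\alpha\to\Diamond\beta)$; (K2) $\Diamond(\alpha\to\beta)\to(\Box\alpha\to\Diamond\beta)$; (M1); (M2); (M3) $\Diamond\beta\to\Diamond(\alpha\to\beta)$; (M4) $\Diamond\neg\alpha\to\Diamond(\alpha\to\beta)$; (T) $\Box\alpha\to\alpha$; (DN1); (DN2); (4) $\Box\alpha\to\Box\Box\alpha$; (5) $\Diamond\Box\alpha\to\Box\alpha$. *)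

(* Defs.v *)
Inductive For : Type :=
| Var : nat -> For
| Neg : For -> For
| Box : For -> For
| Imp : For -> For -> For.

Definition Dia (a : For) : For := Neg (Box (Neg a)).
Definition Or (a b : For) : For := Imp (Neg a) b.
Definition And (a b : For) : For := Neg (Imp a (Neg b)).

(* A standard Hilbert calculus for classical propositional logic in {neg, ->}
   (Mendelson's axioms), instantiated over all of For. *)
Inductive PCAx : For -> Prop :=
| PC1 a b : PCAx (Imp a (Imp b a))
| PC2 a b c : PCAx (Imp (Imp a (Imp b c)) (Imp (Imp a b) (Imp a c)))
| PC3 a b : PCAx (Imp (Imp (Neg b) (Neg a)) (Imp (Imp (Neg b) a) b)).

Inductive KmModAx : For -> Prop :=
| KmK' a b : KmModAx (Imp (Dia a) (Imp (Box (Imp a b)) (Imp (Box a) (Box b))))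
| KmK1' a b : KmModAx (Imp (Dia (Neg b)) (Imp (Box (Imp a b)) (Imp (Dia a) (Dia b))))
| KmK2' a b : KmModAx (Imp (Dia a) (Imp (Dia (Imp a b)) (Imp (Box a) (Dia b))))
| KmM3' a b : KmModAx (Imp (Or (Dia a) (Dia (Neg a))) (Imp (Dia b) (Dia (Imp a b))))
| KmM4' a b : KmModAx (Imp (Dia (Neg b)) (Imp (Dia (Neg a)) (Dia (Imp a b))))
| KmI1 a b : KmModAx (Imp (And (Box a) (Box (Neg a)))
                         (And (Box (Imp a b)) (Box (Neg (Imp a b)))))
| KmI2 a b : KmModAx (Imp (And (Box b) (Box (Neg b)))
                         (And (Box (Imp a b)) (Box (Neg (Imp a b)))))
| KmM1 a b : KmModAx (Imp (Neg (Dia a)) (Box (Imp a b)))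
| KmM2 a b : KmModAx (Imp (Box b) (Box (Imp a b)))
| KmDN1 a : KmModAx (Imp (Box a) (Box (Neg (Neg a))))
| KmDN2 a : KmModAx (Imp (Box (Neg (Neg a))) (Box a)).

Inductive T45mModAx : For -> Prop :=
| TK a b : T45mModAx (Imp (Box (Imp a b)) (Imp (Box a) (Box b)))
| TK1 a b : T45mModAx (Imp (Box (Imp a b)) (Imp (Dia a) (Dia b)))
| TK2 a b : T45mModAx (Imp (Dia (Imp a b)) (Imp (Box a) (Dia b)))
| TM1 a b : T45mModAx (Imp (Neg (Dia a)) (Box (Imp a b)))
| TM2 a b : T45mModAx (Imp (Box b) (Box (Imp a b)))
| TM3 a b : T45mModAx (Imp (Dia b) (Dia (Imp a b)))
| TM4 a b : T45mModAx (Imp (Dia (Neg a)) (Dia (Imp a b)))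
| TT a : T45mModAx (Imp (Box a) a)
| TDN1 a : T45mModAx (Imp (Box a) (Box (Neg (Neg a))))
| TDN2 a : T45mModAx (Imp (Box (Neg (Neg a))) (Box a))
| T4 a : T45mModAx (Imp (Box a) (Box (Box a)))
| T5 a : T45mModAx (Imp (Dia (Box a)) (Box a)).

Definition KmAx (a : For) : Prop := PCAx a \/ KmModAx a.
Definition T45mAx (a : For) : Prop := PCAx a \/ T45mModAx a.

Inductive Derivable (Ax : For -> Prop) (Gamma : For -> Prop) : For -> Prop :=
| D_ax a : Ax a -> Derivable Ax Gamma a
| D_hyp a : Gamma a -> Derivable Ax Gamma a
| D_mp a b : Derivable Ax Gamma (Imp a b) -> Derivable Ax Gamma a ->
             Derivable Ax Gamma b.

Definition vdash_Km (Gamma : For -> Prop) (a : For) : Prop := Derivable KmAx Gamma a.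
Definition vdash_T45m (Gamma : For -> Prop) (a : For) : Prop := Derivable T45mAx Gamma a.

Definition consequence_relation (S : (For -> Prop) -> For -> Prop) : Prop :=
  (forall (Gamma : For -> Prop) a, Gamma a -> S Gamma a) /\
  (forall (Gamma Delta : For -> Prop) a,
      (forall b, Gamma b -> Delta b) -> S Gamma a -> S Delta a) /\
  (forall (Gamma Delta : For -> Prop) a,
      (forall b, Delta b -> S Gamma b) -> S Delta a -> S Gamma a).

Definition empty_set : For -> Prop := fun _ => False.

Fixpoint box_free (a : For) : Prop :=
  match a with
  | Var _ => True
  | Neg b => box_free b
  | Box _ => False
  | Imp b c => box_free b /\ box_free c
  end.

(* Classical two-valued evaluation (Box clause irrelevant on box-free formulas). *)
Fixpoint eval (v : nat -> bool) (a : For) : bool :=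
  match a with
  | Var n => v n
  | Neg b => negb (eval v b)
  | Box _ => false
  | Imp b c => orb (negb (eval v b)) (eval v c)
  end.

Definition tautology (a : For) : Prop := forall v : nat -> bool, eval v a = true.

(* Main.v *)
Require Import Defs.
From Stdlib Require Import Lia Bool PeanoNat.

Fixpoint ev (v : nat -> bool) (a : For) : bool :=
  match a with
  | Var n => v n
  | Neg b => negb (ev v b)
  | Box b => ev v b
  | Imp b c => orb (negb (ev v b)) (ev v c)
  end.

Lemma ev_eval v a : box_free a -> ev v a = eval v a.
Proof.
  induction a; simpl; intros H; try tauto.
  - rewrite IHa; auto.
  - destruct H; rewrite IHa1, IHa2; auto.
Qed.

Lemma T45m_sound a : T45mAx a -> forall v, ev v a = true.
Proof.
  intros [H|H] v; destruct H; simpl;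
  repeat match goal with |- context [ev v ?x] => destruct (ev v x) end; reflexivity.
Qed.

Lemma T45m_sound_der a : Derivable T45mAx empty_set a -> forall v, ev v a = true.
Proof.
  induction 1; intros v.
  - apply T45m_sound; auto.
  - destruct H.
  - specialize (IHDerivable1 v); specialize (IHDerivable2 v); simpl in *.
    rewrite IHDerivable2 in IHDerivable1; simpl in *; auto.
Qed.

Notation D := (Derivable PCAx).
Definition ext (G : For -> Prop) h : For -> Prop := fun x => x = h \/ G x.

Lemma mono G G' a : (forall x, G x -> G' x) -> D G a -> D G' a.
Proof.
  intros HG; induction 1.
  - apply D_ax; auto.
  - apply D_hyp; auto.
  - eapply D_mp; eauto.
Qed.

Ltac ax := apply D_ax; constructor.
Ltac mp x := apply (D_mp _ _ x).

Lemma Id G a : D G (Imp a a).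
Proof.
  mp (Imp a (Imp a a)).
  - mp (Imp a (Imp (Imp a a) a)).
    + ax.
    + ax.
  - ax.
Qed.

Lemma DT G h b : D (ext G h) b -> D G (Imp h b).
Proof.
  induction 1.
  - mp a; [ax| apply D_ax; auto].
  - destruct H as [->|H]. apply Id. mp a; [ax| apply D_hyp; auto].
  - mp (Imp h a); auto. mp (Imp h (Imp a b)); auto. ax.
Qed.

Lemma hyp0 G h : D (ext G h) h.
Proof. apply D_hyp; left; reflexivity. Qed.
Lemma hyp1 G h h' : D (ext (ext G h') h) h'.
Proof. apply D_hyp; right; left; reflexivity. Qed.
Lemma wk G h a : D G a -> D (ext G h) a.
Proof. apply mono; intros; right; auto. Qed.

Lemma L1 G b : D G (Imp (Neg (Neg b)) b).
Proof.
  apply DT. mp (Imp (Neg b) (Neg b)); [|apply Id].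
  mp (Imp (Neg b) (Neg (Neg b))); [ax|].
  mp (Neg (Neg b)); [ax| apply hyp0].
Qed.

Lemma L2 G b : D G (Imp b (Neg (Neg b))).
Proof.
  apply DT. mp (Imp (Neg (Neg (Neg b))) b).
  - mp (Imp (Neg (Neg (Neg b))) (Neg b)); [ax| apply L1].
  - mp b; [ax| apply hyp0].
Qed.

Lemma L3 G a b : D G (Imp (Neg a) (Imp a b)).
Proof.
  apply DT; apply DT. mp (Imp (Neg b) a).
  - mp (Imp (Neg b) (Neg a)); [ax|]. mp (Neg a); [ax|apply hyp1].
  - mp a; [ax|apply hyp0].
Qed.

Lemma L4 G a b : D G (Imp (Imp (Neg b) (Neg a)) (Imp a b)).
Proof.
  apply DT; apply DT. mp (Imp (Neg b) a).
  - mp (Imp (Neg b) (Neg a)); [ax|apply hyp1].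
  - mp a; [ax|apply hyp0].
Qed.

Lemma L5 G a b : D G (Imp (Imp a b) (Imp (Neg b) (Neg a))).
Proof.
  apply DT. mp (Imp (Neg (Neg a)) (Neg (Neg b))); [apply L4|].
  apply DT. mp b; [apply L2|]. mp a; [apply hyp1|].
  mp (Neg (Neg a)); [apply L1|apply hyp0].
Qed.

Lemma L6 G a b : D G (Imp a (Imp (Neg b) (Neg (Imp a b)))).
Proof.
  apply DT. mp (Imp (Imp a b) b); [apply L5|].
  apply DT. mp a; [apply hyp0|apply hyp1].
Qed.

Lemma L7 G a b : D G (Imp (Imp a b) (Imp (Imp (Neg a) b) b)).
Proof.
  apply DT; apply DT.
  mp (Imp (Neg b) (Neg a)).
  - mp (Imp (Neg b) (Neg (Neg a))); [ax|].
    mp (Imp (Neg a) b); [apply L5|apply hyp0].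
  - mp (Imp a b); [apply L5|apply hyp1].
Qed.

Definition lit (v : nat -> bool) n := if v n then Var n else Neg (Var n).
Definition Gam v k : For -> Prop := fun x => exists n, n < k /\ x = lit v n.
Definition hat v a := if eval v a then a else Neg a.

Fixpoint maxv (a : For) : nat :=
  match a with
  | Var n => n
  | Neg b => maxv b
  | Box b => maxv b
  | Imp b c => Nat.max (maxv b) (maxv c)
  end.

Lemma kalmar v a : box_free a -> forall N, maxv a < N -> D (Gam v N) (hat v a).
Proof.
  induction a; simpl; intros Hb N HN; try tauto.
  - apply D_hyp. exists n; split; [exact HN|]. unfold hat, lit; simpl. destruct (v n); reflexivity.
  - specialize (IHa Hb N HN). unfold hat in *; simpl.
    destruct (eval v a); simpl; auto. mp a; [apply L2|auto].
  - destruct Hb as [H1 H2].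
    specialize (IHa1 H1 N ltac:(lia)). specialize (IHa2 H2 N ltac:(lia)).
    unfold hat in *; simpl.
    destruct (eval v a1) eqn:E1; destruct (eval v a2) eqn:E2; simpl in *.
    + mp a2; auto; ax.
    + mp (Neg a2); auto. mp a1; auto. apply L6.
    + mp a2; auto; ax.
    + mp (Neg a1); auto. apply L3.
Qed.

Definition upd (v : nat -> bool) k (b : bool) := fun n => if Nat.eqb n k then b else v n.

Lemma step a k : (forall v, D (Gam v (S k)) a) -> forall v, D (Gam v k) a.
Proof.
  intros H v.
  assert (Hb : forall b, D (ext (Gam v k) (lit (upd v k b) k)) a).
  { intros b. apply (mono (Gam (upd v k b) (S k))); auto.
    intros x [n [Hn ->]].
    destruct (Nat.eq_dec n k) as [->|Hne].
    - left; reflexivity.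
    - right. exists n; split; [lia|]. unfold lit, upd.
      rewrite (proj2 (Nat.eqb_neq n k) Hne). reflexivity. }
  pose proof (DT _ _ _ (Hb true)) as Ht. pose proof (DT _ _ _ (Hb false)) as Hf.
  unfold lit, upd in Ht, Hf. rewrite Nat.eqb_refl in Ht, Hf.
  mp (Imp (Neg (Var k)) a); auto. mp (Imp (Var k) a); auto. apply L7.
Qed.

Lemma complete a : box_free a -> tautology a -> D empty_set a.
Proof.
  intros Hb Ht.
  set (N := S (maxv a)).
  assert (forall d k, k + d = N -> forall v, D (Gam v k) a).
  { induction d; intros k Hk v.
    - replace k with N by lia. pose proof (kalmar v a Hb N ltac:(unfold N; lia)) as K.
      unfold hat in K. rewrite Ht in K. exact K.
    - apply step. apply IHd. lia. }
  apply (mono (Gam (fun _ => true) 0)); [intros x [n [Hn _]]; lia|].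
  apply (H N 0); lia.
Qed.

Lemma PC_Km G a : D G a -> vdash_Km G a.
Proof.
  induction 1.
  - apply D_ax; left; auto.
  - apply D_hyp; auto.
  - eapply D_mp; eauto.
Qed.

Theorem mainTheorem17 (S : (For -> Prop) -> For -> Prop) :
  consequence_relation S ->
  (forall (Gamma : For -> Prop) (a : For), vdash_Km Gamma a -> S Gamma a) ->
  (forall (Gamma : For -> Prop) (a : For), S Gamma a -> vdash_T45m Gamma a) ->
  forall a : For, box_free a -> (S empty_set a <-> tautology a).
Proof.
  intros _ HK HT a Hb; split.
  - intros HS v. rewrite <- ev_eval by auto. apply T45m_sound_der. apply HT; auto.
  - intros Ht. apply HK. apply PC_Km. apply complete; auto.
Qed.
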